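(* Let the joint distributions of the pairs $(\mathbf{X},\mathbf{Y_1})$ and $(\mathbf{X},\mathbf{Y_2})$ be given as in the context. Then there exists a random vector $\mathbf{Y}$ such that $(\mathbf{X},\mathbf{Y_1},\mathbf{Y_2},\mathbf{Y})$ is jointly Gaussian (with the pairs $(\mathbf{X},\mathbf{Y_i})$ having the given distributions), $\mathbf{X}\leftrightarrow\mathbf{Y}\leftrightarrow(\mathbf{Y_1},\mathbf{Y_2})$, and $$K^{-1}_{\mathbf{X}|\mathbf{Y}}=K^{-1}_{\mathbf{X}|\mathbf{Y_1}}+\widehat{K}=K^{-1}_{\mathbf{X}|\mathbf{Y_2}}+\widetilde{K},\qquad \widehat{K}=\begin{pmatrix}A&0\\0&0\end{pmatrix},\ \widetilde{K}=\begin{pmatrix}0&0\\0&-B\end{pmatrix}.$$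
   Context: $\mathbf{X}$ ($k\times1$) and $\mathbf{Y_i}$ ($k_i\times1$), $i=1,2$, are such that each pair $(\mathbf{X},\mathbf{Y_i})$ is jointly Gaussian with zero mean and invertible conditional covariance $K_{\mathbf{X}|\mathbf{Y_i}}$. Assume $l_1+l_2=k$ and $K^{-1}_{\mathbf{X}|\mathbf{Y_2}}-K^{-1}_{\mathbf{X}|\mathbf{Y_1}}=\begin{pmatrix}A&0\\0&B\end{pmatrix}$ with $A\succeq0$ an $l_1\times l_1$ diagonal matrix and $B\prec0$ an $l_2\times l_2$ diagonal matrix. $K_{\mathbf{X}|\mathbf{Z}}$ denotes the conditional covariance of $\mathbf{X}$ given $\mathbf{Z}$; $\leftrightarrow$ denotes a Markov chain. *)

(* Defs.v *)
(* covariance-matrix level formalization of zero-mean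
   jointly Gaussian vectors. *)
From HB Require Import structures.
From mathcomp Require Import all_boot all_order all_algebra.
From mathcomp Require Import reals.
Set Implicit Arguments. Unset Strict Implicit. Unset Printing Implicit Defensive.
Import Order.TTheory GRing.Theory Num.Theory.
Local Open Scope ring_scope.

Section Gauss.
Variable R : realType.

Definition psd n (A : 'M[R]_n) : Prop :=
  A^T = A /\ forall v : 'cV[R]_n, 0 <= (v^T *m A *m v) 0 0.

Definition negdef n (A : 'M[R]_n) : Prop :=
  A^T = A /\ forall v : 'cV[R]_n, v != 0 -> (v^T *m A *m v) 0 0 < 0.

(* covariance between the sub-vectors of the big Gaussian vector selected by
   the coordinate maps f and g, given the joint covariance K *)
Definition covsub n a b (K : 'M[R]_n) (f : 'I_a -> 'I_n) (g : 'I_b -> 'I_n)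
  : 'M[R]_(a, b) := \matrix_(i, j) K (f i) (g j).

(* conditional cross-covariance  K_{U V | W}  (Gaussian conditioning,
   generalized inverse pinvmx of K_W) *)
Definition condcrosscov n a b c (K : 'M[R]_n) (f : 'I_a -> 'I_n)
  (h : 'I_b -> 'I_n) (g : 'I_c -> 'I_n) : 'M[R]_(a, b) :=
  covsub K f h - covsub K f g *m pinvmx (covsub K g g) *m covsub K g h.

Definition condcov n a c (K : 'M[R]_n) (f : 'I_a -> 'I_n) (g : 'I_c -> 'I_n)
  : 'M[R]_a := condcrosscov K f f g.

(* Markov chain U <-> W <-> V for jointly Gaussian vectors:
   U and V are conditionally uncorrelated (hence independent) given W *)
Definition gauss_markov n a b c (K : 'M[R]_n) (f : 'I_a -> 'I_n)
  (g : 'I_c -> 'I_n) (h : 'I_b -> 'I_n) : Prop :=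
  condcrosscov K f h g = 0.

End Gauss.

Definition catidx n a b (f : 'I_a -> 'I_n) (g : 'I_b -> 'I_n) :
  'I_(a + b) -> 'I_n :=
  fun i => match split i with inl x => f x | inr y => g y end.

(* Main.v *)
Require Import Defs.
From HB Require Import structures.
From mathcomp Require Import all_boot all_order all_algebra.
From mathcomp Require Import reals.
From mathcomp Require Import ring.
Import Order.TTheory GRing.Theory Num.Theory.
Local Open Scope ring_scope.
Set Implicit Arguments. Unset Strict Implicit.

Section Aux.
Variable R : realType.

Definition bf n k (A : 'M[R]_(n,k)) (x : 'cV[R]_n) (y : 'cV[R]_k) : R :=
  (x^T *m A *m y) 0 0.

Lemma bf_tr n k (A : 'M[R]_(n,k)) x y : bf A^T y x = bf A x y.
Proof.
rewrite /bf.
have -> : y^T *m A^T *m x = (x^T *m A *m y)^T by rewrite !trmx_mul trmxK mulmxA.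
by rewrite mxE.
Qed.

Lemma bfDm n k (A B : 'M[R]_(n,k)) x y : bf (A + B) x y = bf A x y + bf B x y.
Proof. by rewrite /bf mulmxDr mulmxDl mxE. Qed.

Lemma bfNm n k (A : 'M[R]_(n,k)) x y : bf (- A) x y = - bf A x y.
Proof. by rewrite /bf mulmxN mulNmx mxE. Qed.

Lemma bfBm n k (A B : 'M[R]_(n,k)) x y : bf (A - B) x y = bf A x y - bf B x y.
Proof. by rewrite bfDm bfNm. Qed.

Lemma bfDl n k (A : 'M[R]_(n,k)) x x' y : bf A (x + x') y = bf A x y + bf A x' y.
Proof. by rewrite /bf linearD /= !mulmxDl mxE. Qed.

Lemma bfDr n k (A : 'M[R]_(n,k)) x y y' : bf A x (y + y') = bf A x y + bf A x y'.
Proof. by rewrite /bf mulmxDr mxE. Qed.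

Lemma bfZl n k (A : 'M[R]_(n,k)) a x y : bf A (a *: x) y = a * bf A x y.
Proof. by rewrite /bf linearZ /= -!scalemxAl mxE. Qed.

Lemma bfZr n k (A : 'M[R]_(n,k)) a x y : bf A x (a *: y) = a * bf A x y.
Proof. by rewrite /bf -!scalemxAr mxE. Qed.

Lemma bfNl n k (A : 'M[R]_(n,k)) x y : bf A (- x) y = - bf A x y.
Proof. by rewrite -scaleN1r bfZl mulN1r. Qed.

Lemma bfNr n k (A : 'M[R]_(n,k)) x y : bf A x (- y) = - bf A x y.
Proof. by rewrite -scaleN1r bfZr mulN1r. Qed.

Lemma bf0l n k (A : 'M[R]_(n,k)) y : bf A 0 y = 0.
Proof. by rewrite /bf trmx0 !mul0mx mxE. Qed.

Lemma bf0r n k (A : 'M[R]_(n,k)) x : bf A x 0 = 0.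
Proof. by rewrite /bf mulmx0 mxE. Qed.

Lemma bf_mull n p k (L : 'M[R]_(n,p)) (A : 'M[R]_(p,k)) x y :
  bf (L *m A) x y = bf A (L^T *m x) y.
Proof. by rewrite /bf trmx_mul trmxK !mulmxA. Qed.

Lemma bf_mulr n p k (A : 'M[R]_(n,p)) (L : 'M[R]_(p,k)) x y :
  bf (A *m L) x y = bf A x (L *m y).
Proof. by rewrite /bf !mulmxA. Qed.

Lemma bf_block n1 n2 k1 k2 (P : 'M[R]_(n1,k1)) (G : 'M[R]_(n1,k2))
  (H : 'M[R]_(n2,k1)) (T : 'M[R]_(n2,k2)) u v u' v' :
  bf (block_mx P G H T) (col_mx u v) (col_mx u' v') =
  bf P u u' + bf G u v' + bf H v u' + bf T v v'.
Proof.
rewrite /bf tr_col_mx mul_row_block mul_row_col !mulmxDl !mxE.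
ring.
Qed.

Lemma bf1 n (w : 'cV[R]_n) : bf 1%:M w w = \sum_i (w i 0) ^+ 2.
Proof.
rewrite /bf mulmx1 mxE; apply: eq_bigr => i _; by rewrite mxE expr2.
Qed.

Lemma bf1_ge0 n (w : 'cV[R]_n) : 0 <= bf 1%:M w w.
Proof. by rewrite bf1 sumr_ge0 // => i _; rewrite sqr_ge0. Qed.

Lemma bf1_eq0 n (w : 'cV[R]_n) : bf 1%:M w w = 0 -> w = 0.
Proof.
rewrite bf1 => h; apply/matrixP => i j; rewrite (ord1 j) mxE.
have := psumr_eq0P (P := predT) (fun i _ => sqr_ge0 (w i 0)) h.
by move=> /(_ i isT) /eqP; rewrite sqrf_eq0 => /eqP.
Qed.

Lemma core_real (a s : R) : 0 <= a -> (forall t, 0 <= a * t ^+ 2 + s * t) -> s = 0.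
Proof.
move=> a0 h; set c := a + 1.
have c0 : c != 0 by rewrite /c; apply/lt0r_neq0; rewrite ltr_wpDl.
have := h (- s / c).
have -> : a * (- s / c) ^+ 2 + s * (- s / c) = - (s / c) ^+ 2.
  by rewrite /c; field; rewrite -/c.
rewrite oppr_ge0 => h2.
have : (s / c) ^+ 2 = 0 by apply/eqP; rewrite eq_le h2 sqr_ge0.
move/eqP; rewrite sqrf_eq0 mulf_eq0 invr_eq0 (negPf c0) orbF.
by move/eqP.
Qed.


Lemma psd_add n (A B : 'M[R]_n) : psd A -> psd B -> psd (A + B).
Proof.
move=> [sA pA] [sB pB]; split; first by rewrite linearD /= sA sB.
by move=> v; have := addr_ge0 (pA v) (pB v); rewrite -!/(bf _ _ _) bfDm.
Qed.

Lemma psd_LSLt n p (L : 'M[R]_(n,p)) (S : 'M[R]_p) : psd S -> psd (L *m S *m L^T).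
Proof.
move=> [sS pS]; split; first by rewrite !trmx_mul trmxK sS mulmxA.
move=> v; rewrite -/(bf _ _ _) bf_mulr bf_mull /bf; exact: pS.
Qed.

Lemma psd_block n k (P : 'M[R]_n) (G : 'M[R]_(n,k)) (T : 'M[R]_k) :
  P^T = P -> T^T = T ->
  (forall u v, 0 <= bf P u u + bf G u v + bf G^T v u + bf T v v) ->
  psd (block_mx P G G^T T).
Proof.
move=> sP sT h; split; first by rewrite tr_block_mx sP sT trmxK.
move=> w; rewrite -/(bf _ _ _) -(vsubmxK w) bf_block; exact: h.
Qed.

Lemma psd_block_form n k (P : 'M[R]_n) (G : 'M[R]_(n,k)) (T : 'M[R]_k) u v :
  psd (block_mx P G G^T T) ->
  0 <= bf P u u + bf G u v + bf G^T v u + bf T v v.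
Proof. by move=> [_ h]; have := h (col_mx u v); rewrite -/(bf _ _ _) bf_block. Qed.

Lemma psd_block_sym n k (P : 'M[R]_n) (G : 'M[R]_(n,k)) (T : 'M[R]_k) :
  psd (block_mx P G G^T T) -> P^T = P /\ T^T = T.
Proof.
move=> [s _]; move: s; rewrite tr_block_mx trmxK => /eq_block_mx [-> _ _ ->].
by [].
Qed.

Lemma psd_ul n k (P : 'M[R]_n) (G : 'M[R]_(n,k)) (T : 'M[R]_k) :
  psd (block_mx P G G^T T) -> psd P.
Proof.
move=> h; have [sP _] := psd_block_sym h; split => // u.
by have := psd_block_form u 0 h; rewrite ?bf0r ?bf0l ?addr0.
Qed.

Lemma psd_dr n k (P : 'M[R]_n) (G : 'M[R]_(n,k)) (T : 'M[R]_k) :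
  psd (block_mx P G G^T T) -> psd T.
Proof.
move=> h; have [_ sT] := psd_block_sym h; split => // v.
by have := psd_block_form 0 v h; rewrite ?bf0r ?bf0l ?add0r ?addr0.
Qed.

Lemma psd_swap n k (P : 'M[R]_n) (G : 'M[R]_(n,k)) (T : 'M[R]_k) :
  psd (block_mx P G G^T T) -> psd (block_mx T G^T G P).
Proof.
move=> h; have [sP sT] := psd_block_sym h.
rewrite -[X in block_mx _ _ X _](trmxK G).
apply: psd_block => // u v; rewrite trmxK.
have := psd_block_form v u h.
by rewrite !bf_tr; congr (0 <= _); ring.
Qed.

Lemma psd_ker n (S : 'M[R]_n) w : psd S -> bf S w w = 0 -> S *m w = 0.
Proof.
move=> [sS pS] h0; set z := S *m w.
have key : forall t, 0 <= bf S z z * t ^+ 2 + (2 * bf 1%:M z z) * t.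
  move=> t; have := pS (w + t *: z); rewrite -/(bf _ _ _).
  rewrite !bfDl !bfDr !bfZl !bfZr h0.
  have -> : bf S w z = bf 1%:M z z.
    by rewrite /bf /z mulmx1 -{1}sS -trmx_mul.
  have -> : bf S z w = bf 1%:M z z.
    by rewrite -bf_tr sS /bf /z mulmx1 -{1}sS -trmx_mul.
  by move=> h; congr (0 <= _): h; ring.
have := core_real (pS z) key => /eqP; rewrite mulf_eq0 pnatr_eq0 /= => /eqP.
exact: bf1_eq0.
Qed.

Lemma block_ker n k (P : 'M[R]_n) (G : 'M[R]_(n,k)) (T : 'M[R]_k) (v : 'cV[R]_k) :
  psd (block_mx P G G^T T) -> T *m v = 0 -> G *m v = 0.
Proof.
move=> h Tv; set w := G *m v.
have key : forall t, 0 <= bf P w w * t ^+ 2 + (2 * bf 1%:M w w) * t.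
  move=> t; have := psd_block_form (t *: w) v h.
  rewrite bf_tr !bfZl !bfZr.
  have -> : bf T v v = 0 by rewrite /bf -mulmxA Tv mulmx0 mxE.
  have -> : bf G w v = bf 1%:M w w by rewrite /bf /w mulmx1 mulmxA.
  by move=> h1; congr (0 <= _): h1; ring.
have := core_real (proj2 (psd_ul h) w) key => /eqP.
by rewrite mulf_eq0 pnatr_eq0 /= => /eqP; exact: bf1_eq0.
Qed.

Lemma block_sub n k (P : 'M[R]_n) (G : 'M[R]_(n,k)) (T : 'M[R]_k) :
  psd (block_mx P G G^T T) -> (G <= T)%MS.
Proof.
move=> h; rewrite submxE; apply/eqP/matrixP => i j.
have h1 : T *m (cokermx T *m delta_mx j (0 : 'I_1)) = 0 by rewrite mulmxA mulmx_coker mul0mx.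
have := block_ker h h1; rewrite mulmxA -colE => /matrixP /(_ i 0).
rewrite [LHS]mxE [RHS]mxE => ->.
by rewrite mxE.
Qed.

Lemma schur1 n k (P : 'M[R]_n) (G : 'M[R]_(n,k)) (T : 'M[R]_k) :
  psd (block_mx P G G^T T) -> psd (P - G *m pinvmx T *m G^T).
Proof.
move=> h; have [sP sT] := psd_block_sym h.
have HT : G *m pinvmx T *m T = G by rewrite mulmxKpV // (block_sub h).
move: (G *m pinvmx T) HT => H HT.
have E : H *m G^T = H *m T *m H^T by rewrite -HT trmx_mul sT mulmxA.
have GHt : G *m H^T = H *m T *m H^T by rewrite -HT.
rewrite E; split.
  by rewrite linearB /= sP !trmx_mul trmxK sT mulmxA.
move=> u; rewrite -/(bf _ _ _).
have := psd_block_form u (- (H^T *m u)) h.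
rewrite bf_tr !bfNr !bfNl opprK bfBm.
rewrite -bf_mulr GHt -bf_mulr -bf_mull mulmxA.
by move=> h1; congr (0 <= _): h1; ring.
Qed.

Lemma schur2 n k (P : 'M[R]_n) (G : 'M[R]_(n,k)) (T : 'M[R]_k) :
  psd (block_mx P G G^T T) -> psd (block_mx (G *m pinvmx T *m G^T) G G^T T).
Proof.
move=> h; have [sP sT] := psd_block_sym h.
have HT : G *m pinvmx T *m T = G by rewrite mulmxKpV // (block_sub h).
move: (G *m pinvmx T) HT => H HT.
have E : H *m G^T = H *m T *m H^T by rewrite -HT trmx_mul sT mulmxA.
rewrite E; apply: psd_block => //.
  by rewrite !trmx_mul trmxK sT mulmxA.
move=> u v; have := proj2 (psd_dr h) (H^T *m u + v); rewrite -/(bf _ _ _).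
rewrite !bfDl !bfDr -!bf_mull -!bf_mulr HT.
have -> : T *m H^T = G^T by rewrite -HT trmx_mul sT.
by move=> h1; congr (0 <= _): h1; ring.
Qed.

Lemma psd_add_ul n k (P D : 'M[R]_n) (G : 'M[R]_(n,k)) (T : 'M[R]_k) :
  psd (block_mx P G G^T T) -> psd D -> psd (block_mx (P + D) G G^T T).
Proof.
move=> h hD.
have -> : block_mx (P + D) G G^T T = block_mx P G G^T T + block_mx D 0 0 0.
  by rewrite add_block_mx !addr0.
apply: psd_add => //.
pose L := col_mx (1%:M : 'M[R]_n) (0 : 'M[R]_(k, n)).
have -> : block_mx D 0 0 0 = L *m D *m L^T.
  by rewrite /L tr_col_mx mul_col_mx mul_col_row mul1mx !mul0mx trmx1 mulmx1 trmx0 !mulmx0.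
exact: psd_LSLt.
Qed.

Lemma psd_inv n (S : 'M[R]_n) : psd S -> S \in unitmx -> psd (invmx S).
Proof.
move=> [sS pS] uS; split; first by rewrite trmx_inv sS.
move=> v; have := pS (invmx S *m v); congr (0 <= _).
rewrite trmx_mul trmx_inv sS -[v^T *m _ *m S]mulmxA mulVmx // mulmx1 mulmxA.
by [].
Qed.


Lemma inv_mono n (D1 E : 'M[R]_n) : psd D1 -> D1 \in unitmx -> psd E ->
  (invmx D1 + E) \in unitmx /\ psd (invmx (invmx D1 + E)) /\
  psd (D1 - invmx (invmx D1 + E)).
Proof.
move=> hD1 u1 hE.
have hP1 := psd_inv hD1 u1.
have hP := psd_add hP1 hE.
have uP : (invmx D1 + E) \in unitmx.
  rewrite -row_free_unit -kermx_eq0; apply/eqP/row_matrixP => i; rewrite row0.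
  set P := invmx D1 + E in hP *.
  set r := row i (kermx P).
  have rP : r *m P = 0 by rewrite /r -row_mul mulmx_ker row0.
  set v := r^T.
  have Pv : P *m v = 0 by rewrite /v -(proj1 hP) -trmx_mul rP trmx0.
  have bP : bf P v v = 0 by rewrite /bf -mulmxA Pv mulmx0 mxE.
  have bP1 : bf (invmx D1) v v = 0.
    move: bP; rewrite bfDm => /eqP; rewrite paddr_eq0; last 2 first.
    - exact: (proj2 hP1 v).
    - exact: (proj2 hE v).
    by case/andP => /eqP.
  have : bf D1 (invmx D1 *m v) (invmx D1 *m v) = 0.
    rewrite /bf trmx_mul (proj1 hP1) -[v^T *m _ *m D1]mulmxA mulVmx // mulmx1 mulmxA.
    exact: bP1.
  move/(psd_ker hD1); rewrite mulmxA mulmxV // mul1mx => v0.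
  by rewrite -[r]trmxK -/v v0 trmx0.
split => //.
have hD := psd_inv hP uP.
split => //.
move: uP hP hD; set P := invmx D1 + E; set D := invmx P => uP hP hD.
have eE : E = P - invmx D1 by rewrite /P addrAC subrr add0r.
have key1 : D *m E *m D1 = D1 - D.
  by rewrite eE mulmxBr mulmxBl /D mulVmx // mul1mx -mulmxA mulVmx // mulmx1.
have key2 : D1 *m E *m D = D1 - D.
  by rewrite eE mulmxBr mulmxBl mulmxV // mul1mx -mulmxA /D mulmxV // mulmx1.
have Id : D1 - D = D *m E *m D^T + (D *m E) *m D1 *m (D *m E)^T.
  rewrite trmx_mul (proj1 hD) (proj1 hE).
  have -> : D *m E *m D1 *m (E *m D) = D *m E *m (D1 - D).
    by rewrite -key2 !mulmxA.
  by rewrite mulmxBr key1 [in RHS]addrC subrK.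
rewrite Id; apply: psd_add; exact: psd_LSLt.
Qed.

Lemma negdef_psd n (B : 'M[R]_n) : negdef B -> psd (- B).
Proof.
move=> [sB nB]; split; first by rewrite linearN /= sB.
move=> v; rewrite -/(bf _ _ _) bfNm oppr_ge0.
case: (eqVneq v 0) => [->|nz]; first by rewrite bf0l.
exact: ltW (nB v nz).
Qed.

Lemma psd_diag2 n1 n2 (A : 'M[R]_n1) (B : 'M[R]_n2) :
  psd A -> psd B -> psd (block_mx A 0 0 B).
Proof.
move=> hA hB.
have -> : block_mx A 0 0 B = block_mx A 0 0 0 + block_mx 0 0 0 B.
  by rewrite add_block_mx !addr0 add0r.
apply: psd_add.
  pose L := col_mx (1%:M : 'M[R]_n1) (0 : 'M[R]_(n2, n1)).
  have -> : block_mx A 0 0 0 = L *m A *m L^T.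
    by rewrite /L tr_col_mx mul_col_mx mul_col_row mul1mx !mul0mx trmx1 mulmx1 trmx0 !mulmx0.
  exact: psd_LSLt.
pose L := col_mx (0 : 'M[R]_(n1, n2)) (1%:M : 'M[R]_n2).
have -> : block_mx 0 0 0 B = L *m B *m L^T.
  by rewrite /L tr_col_mx mul_col_mx mul_col_row mul1mx !mul0mx trmx1 mulmx1 trmx0 !mulmx0.
exact: psd_LSLt.
Qed.

Lemma psd0 n : psd (0 : 'M[R]_n).
Proof. by split; [rewrite trmx0 | move=> v; rewrite mulmx0 mul0mx mxE]. Qed.


Definition rowsel N p a (A : 'M[R]_(N,p)) (f : 'I_a -> 'I_N) : 'M[R]_(a,p) :=
  \matrix_(i, j) A (f i) j.

Lemma covsubD N a b (A B : 'M[R]_N) (f : 'I_a -> 'I_N) (g : 'I_b -> 'I_N) :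
  covsub (A + B) f g = covsub A f g + covsub B f g.
Proof. by apply/matrixP => i j; rewrite !mxE. Qed.

Lemma covsub_LSL N p a b (L : 'M[R]_(N,p)) (S : 'M[R]_p)
  (f : 'I_a -> 'I_N) (g : 'I_b -> 'I_N) :
  covsub (L *m S *m L^T) f g = rowsel L f *m S *m (rowsel L g)^T.
Proof.
apply/matrixP => i j; rewrite !mxE; apply: eq_bigr => k _; rewrite !mxE.
by congr (_ * _); apply: eq_bigr => l _; rewrite !mxE.
Qed.

Lemma covsub_catl N a1 a2 b (K : 'M[R]_N) (f : 'I_a1 -> 'I_N) (g : 'I_a2 -> 'I_N)
  (h : 'I_b -> 'I_N) :
  covsub K (catidx f g) h = col_mx (covsub K f h) (covsub K g h).
Proof.
apply/matrixP => i j; rewrite /catidx !mxE; case: split => q /=; by rewrite mxE.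
Qed.

Lemma covsub_catr N a b1 b2 (K : 'M[R]_N) (h : 'I_a -> 'I_N) (f : 'I_b1 -> 'I_N)
  (g : 'I_b2 -> 'I_N) :
  covsub K h (catidx f g) = row_mx (covsub K h f) (covsub K h g).
Proof.
apply/matrixP => i j; rewrite /catidx !mxE; case: split => q /=; by rewrite mxE.
Qed.

Lemma covsub_ul a b (K : 'M[R]_(a + b)) : covsub K (@lshift a b) (@lshift a b) = ulsubmx K.
Proof. by apply/matrixP => i j; rewrite !mxE. Qed.
Lemma covsub_ur a b (K : 'M[R]_(a + b)) : covsub K (@lshift a b) (@rshift a b) = ursubmx K.
Proof. by apply/matrixP => i j; rewrite !mxE. Qed.
Lemma covsub_dl a b (K : 'M[R]_(a + b)) : covsub K (@rshift a b) (@lshift a b) = dlsubmx K.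
Proof. by apply/matrixP => i j; rewrite !mxE. Qed.
Lemma covsub_dr a b (K : 'M[R]_(a + b)) : covsub K (@rshift a b) (@rshift a b) = drsubmx K.
Proof. by apply/matrixP => i j; rewrite !mxE. Qed.

Section RS.
Variables (m1 m2 m3 m4 p : nat) (a : 'M[R]_(m1,p)) (b : 'M[R]_(m2,p))
  (c : 'M[R]_(m3,p)) (d : 'M[R]_(m4,p)).
Let Lm := col_mx a (col_mx b (col_mx c d)).
Lemma rsX : rowsel Lm (fun i => @lshift m1 (m2 + (m3 + m4)) i) = a.
Proof. by apply/matrixP => i j; rewrite [LHS]mxE col_mxEu. Qed.
Lemma rsY1 : rowsel Lm (fun j => @rshift m1 (m2 + (m3 + m4)) (@lshift m2 (m3 + m4) j)) = b.
Proof. by apply/matrixP => i j; rewrite [LHS]mxE col_mxEd col_mxEu. Qed.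
Lemma rsY2 : rowsel Lm (fun j => @rshift m1 (m2 + (m3 + m4))
   (@rshift m2 (m3 + m4) (@lshift m3 m4 j))) = c.
Proof. by apply/matrixP => i j; rewrite [LHS]mxE !col_mxEd col_mxEu. Qed.
Lemma rsY : rowsel Lm (fun j => @rshift m1 (m2 + (m3 + m4))
   (@rshift m2 (m3 + m4) (@rshift m3 m4 j))) = d.
Proof. by apply/matrixP => i j; rewrite [LHS]mxE !col_mxEd. Qed.
End RS.

Lemma zaux (V : zmodType) (x y z : V) : x + (y - x - z) = y - z.
Proof. by rewrite addrC addrAC subrK. Qed.

End Aux.
Unset Implicit Arguments. Set Strict Implicit.
Theorem lemma2 (R : realType) (l1 l2 k1 k2 : nat)
  (K1 : 'M[R]_(l1 + l2 + k1)) (K2 : 'M[R]_(l1 + l2 + k2))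
  (A : 'M[R]_l1) (B : 'M[R]_l2) :
  psd K1 -> psd K2 ->
  ulsubmx K1 = ulsubmx K2 ->
  condcov K1 (@lshift (l1 + l2) k1) (@rshift (l1 + l2) k1) \in unitmx ->
  condcov K2 (@lshift (l1 + l2) k2) (@rshift (l1 + l2) k2) \in unitmx ->
  invmx (condcov K2 (@lshift (l1 + l2) k2) (@rshift (l1 + l2) k2))
    - invmx (condcov K1 (@lshift (l1 + l2) k1) (@rshift (l1 + l2) k1))
    = block_mx A 0 0 B ->
  is_diag_mx A -> psd A -> is_diag_mx B -> negdef B ->
  exists (m : nat) (K : 'M[R]_(l1 + l2 + (k1 + (k2 + m)))),
    let X  := fun i : 'I_(l1 + l2) => @lshift (l1 + l2) (k1 + (k2 + m)) i in
    let Y1 := fun j : 'I_k1 =>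
      @rshift (l1 + l2) (k1 + (k2 + m)) (@lshift k1 (k2 + m) j) in
    let Y2 := fun j : 'I_k2 =>
      @rshift (l1 + l2) (k1 + (k2 + m))
        (@rshift k1 (k2 + m) (@lshift k2 m j)) in
    let Y  := fun j : 'I_m =>
      @rshift (l1 + l2) (k1 + (k2 + m))
        (@rshift k1 (k2 + m) (@rshift k2 m j)) in
    psd K /\
        covsub K (catidx X Y1) (catidx X Y1) = K1 /\
        covsub K (catidx X Y2) (catidx X Y2) = K2 /\
        gauss_markov K X Y (catidx Y1 Y2) /\
        condcov K X Y \in unitmx /\
        invmx (condcov K X Y) =
          invmx (condcov K1 (@lshift (l1 + l2) k1) (@rshift (l1 + l2) k1))
          + block_mx A 0 0 0 /\
        invmx (condcov K X Y) =
          invmx (condcov K2 (@lshift (l1 + l2) k2) (@rshift (l1 + l2) k2))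
          + block_mx 0 0 0 (- B).
Proof.
move=> hK1 hK2 eUL u1 u2 hdiff dA hA dB hB.
set Sg := ulsubmx K1.
set C1 := ursubmx K1. set T1 := drsubmx K1.
set C2 := ursubmx K2. set T2 := drsubmx K2.
have sK1 := proj1 hK1. have sK2 := proj1 hK2.
have eK1 : K1 = block_mx Sg C1 C1^T T1.
  by rewrite /C1 trmx_ursub sK1 submxK.
have eK2 : K2 = block_mx Sg C2 C2^T T2.
  by rewrite /C2 /Sg eUL trmx_ursub sK2 submxK.
have hB1 : psd (block_mx Sg C1 C1^T T1) by rewrite -eK1.
have hB2 : psd (block_mx Sg C2 C2^T T2) by rewrite -eK2.
have eD1 : condcov K1 (@lshift (l1 + l2) k1) (@rshift (l1 + l2) k1)
    = Sg - C1 *m pinvmx T1 *m C1^T.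
  rewrite /condcov /condcrosscov covsub_ul covsub_ur covsub_dr covsub_dl.
  have -> : dlsubmx K1 = C1^T by rewrite /C1 trmx_ursub sK1.
  by [].
have eD2 : condcov K2 (@lshift (l1 + l2) k2) (@rshift (l1 + l2) k2)
    = Sg - C2 *m pinvmx T2 *m C2^T.
  rewrite /condcov /condcrosscov covsub_ul covsub_ur covsub_dr covsub_dl.
  have -> : dlsubmx K2 = C2^T by rewrite /C2 trmx_ursub sK2.
  by rewrite -eUL.
move: u1 u2 hdiff.
set D1 := condcov K1 _ _. set D2 := condcov K2 _ _.
move=> u1 u2 hdiff.
have hD1 : psd D1 by rewrite /D1 eD1; exact: schur1.
have hD2 : psd D2 by rewrite /D2 eD2; exact: schur1.
have hE1 : psd (block_mx A 0 0 (0 : 'M[R]_l2)) by apply: psd_diag2 => //; exact: psd0.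
have hE2 : psd (block_mx (0 : 'M[R]_l1) 0 0 (- B)).
  by apply: psd_diag2; [exact: psd0 | exact: negdef_psd].
have eP : invmx D1 + block_mx A 0 0 0 = invmx D2 + block_mx 0 0 0 (- B).
  have -> : invmx D1 = invmx D2 - block_mx A 0 0 B by rewrite -hdiff opprB addrC subrK.
  rewrite -addrA; congr (_ + _).
  by rewrite opp_block_mx add_block_mx !oppr0 !addr0 addNr.
have [uP [hD hD1D]] := inv_mono hD1 u1 hE1.
have [_ [_ hD2D]] := inv_mono hD2 u2 hE2.
rewrite -eP in hD2D.
move: uP hD hD1D hD2D.
set P := invmx D1 + block_mx A 0 0 0.
set D := invmx P.
move=> uP hD hD1D hD2D.
set M := Sg - D.
have hM1 : psd (block_mx M C1 C1^T T1).
  have := psd_add_ul (schur2 hB1) hD1D.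
  by rewrite /D1 eD1 zaux.
have hM2 : psd (block_mx M C2 C2^T T2).
  have := psd_add_ul (schur2 hB2) hD2D.
  by rewrite /D2 eD2 zaux.
have hM := psd_ul hM1.
have sM := proj1 hM.
have hs1 : psd (block_mx T1 C1^T C1^T^T M) by rewrite trmxK; exact: psd_swap.
have hs2 : psd (block_mx T2 C2^T C2^T^T M) by rewrite trmxK; exact: psd_swap.
set F1 := C1^T *m pinvmx M.
set F2 := C2^T *m pinvmx M.
have F1M : F1 *m M = C1^T by rewrite /F1 mulmxKpV // (block_sub hs1).
have F2M : F2 *m M = C2^T by rewrite /F2 mulmxKpV // (block_sub hs2).
have MF1 : M *m F1^T = C1 by rewrite -sM -trmx_mul F1M trmxK.
have MF2 : M *m F2^T = C2 by rewrite -sM -trmx_mul F2M trmxK.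
have hS1 := schur1 hs1. have hS2 := schur1 hs2.
rewrite trmxK in hS1. rewrite trmxK in hS2.
set S1 := T1 - C1^T *m pinvmx M *m C1 in hS1.
set S2 := T2 - C2^T *m pinvmx M *m C2 in hS2.
have eS1 : F1 *m M *m F1^T + S1 = T1.
  by rewrite -mulmxA MF1 /S1 /F1 addrC subrK.
have eS2 : F2 *m M *m F2^T + S2 = T2.
  by rewrite -mulmxA MF2 /S2 /F2 addrC subrK.
pose N := (l1 + l2 + (k1 + (k2 + (l1 + l2))))%N.
pose L1 : 'M[R]_(N, l1 + l2) := col_mx 1%:M (col_mx F1 (col_mx F2 1%:M)).
pose L2 : 'M[R]_(N, l1 + l2) := col_mx 1%:M (col_mx 0 (col_mx 0 0)).
pose L3 : 'M[R]_(N, k1) := col_mx 0 (col_mx 1%:M (col_mx 0 0)).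
pose L4 : 'M[R]_(N, k2) := col_mx 0 (col_mx 0 (col_mx 1%:M 0)).
pose K := L1 *m M *m L1^T + L2 *m D *m L2^T + L3 *m S1 *m L3^T + L4 *m S2 *m L4^T.
exists (l1 + l2)%N, K.
move=> X Y1 Y2 Y.
have cs : forall a b (f : 'I_a -> 'I_N) (g : 'I_b -> 'I_N), covsub K f g =
   rowsel L1 f *m M *m (rowsel L1 g)^T + rowsel L2 f *m D *m (rowsel L2 g)^T
 + rowsel L3 f *m S1 *m (rowsel L3 g)^T + rowsel L4 f *m S2 *m (rowsel L4 g)^T.
  by move=> a b f g; rewrite /K !covsubD !covsub_LSL.
have cXX : covsub K X X = Sg.
  rewrite cs /X /L1 /L2 /L3 /L4 ?rsX.
  rewrite ?trmx1 ?trmx0 ?mul1mx ?mulmx1 ?mul0mx ?mulmx0 ?addr0 ?add0r.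
  by rewrite /M subrK.
Ltac cmp cs X Y1 Y2 Y L1 L2 L3 L4 :=
  rewrite cs /X /Y1 /Y2 /Y /L1 /L2 /L3 /L4 ?rsX ?rsY1 ?rsY2 ?rsY;
  rewrite ?trmx1 ?trmx0 ?mul1mx ?mulmx1 ?mul0mx ?mulmx0 ?addr0 ?add0r.
have cXY1 : covsub K X Y1 = M *m F1^T by cmp cs X Y1 Y2 Y L1 L2 L3 L4.
have cY1X : covsub K Y1 X = F1 *m M by cmp cs X Y1 Y2 Y L1 L2 L3 L4.
have cY1Y1 : covsub K Y1 Y1 = F1 *m M *m F1^T + S1 by cmp cs X Y1 Y2 Y L1 L2 L3 L4.
have cXY2 : covsub K X Y2 = M *m F2^T by cmp cs X Y1 Y2 Y L1 L2 L3 L4.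
have cY2X : covsub K Y2 X = F2 *m M by cmp cs X Y1 Y2 Y L1 L2 L3 L4.
have cY2Y2 : covsub K Y2 Y2 = F2 *m M *m F2^T + S2 by cmp cs X Y1 Y2 Y L1 L2 L3 L4.
have cXY : covsub K X Y = M by cmp cs X Y1 Y2 Y L1 L2 L3 L4.
have cYX : covsub K Y X = M by cmp cs X Y1 Y2 Y L1 L2 L3 L4.
have cYY : covsub K Y Y = M by cmp cs X Y1 Y2 Y L1 L2 L3 L4.
have cYY1 : covsub K Y Y1 = M *m F1^T by cmp cs X Y1 Y2 Y L1 L2 L3 L4.
have cYY2 : covsub K Y Y2 = M *m F2^T by cmp cs X Y1 Y2 Y L1 L2 L3 L4.
have eC : condcov K X Y = D.
  rewrite /condcov /condcrosscov cXX cXY cYY cYX mulmxKpV ?submx_refl //.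
  by rewrite /M opprB addrC subrK.
split.
  rewrite /K; apply: psd_add; last exact: (psd_LSLt L4 hS2).
  apply: psd_add; last exact: (psd_LSLt L3 hS1).
  apply: psd_add; [exact: (psd_LSLt L1 hM) | exact: (psd_LSLt L2 hD)].
split.
  by rewrite covsub_catl !covsub_catr cXX cXY1 cY1X cY1Y1 eS1 MF1 F1M eK1.
split.
  by rewrite covsub_catl !covsub_catr cXX cXY2 cY2X cY2Y2 eS2 MF2 F2M eK2.
split.
  rewrite /gauss_markov /condcrosscov !covsub_catr cXY1 cXY2 cXY cYY cYY1 cYY2.
  rewrite -mul_mx_row.
  have -> : forall W : 'M_(l1 + l2, k1 + k2), M *m pinvmx M *m (M *m W) = M *m W.
    by move=> W; rewrite mulmxA mulmxKpV ?submx_refl.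
  by rewrite subrr.
split; first by rewrite eC unitmx_inv.
split; first by rewrite eC /D invmxK.
by rewrite eC /D invmxK.
Qed.
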